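(* Let $a,d,r,h,n$ be positive integers with $r\geq2$, $\gcd(a,d)=\gcd(a,r)=1$ and $d>hn(r-1)$. Put $a_0=a$ and $a_{k+1}=ha+r^kd$ for $0\leq k\leq n$, and suppose $\{a_0,\dots,a_{n+1}\}$ is a minimal system of generators of the numerical semigroup $\mathfrak{S}_{n+2}=\langle a_0,\dots,a_{n+1}\rangle$. For $1\leq i\leq a-1$ let $i=\sum_{k=0}^{n}a_{ki}r^k$ be the $r$-adic representation of $i$ up to order $n$ and $\ell_i=\sum_{k=0}^{n}a_{ki}$. Then $$\mathrm{Ap}(\mathfrak{S}_{n+2},a)=\{0\}\cup\{\ell_iha+id\mid 1\leq i\leq a-1\}.$$
   Context: The $r$-adic representation of $i$ up to order $n$ is the unique expression $i=\sum_{k=0}^{n}\alpha_kr^k$ with nonnegative integers $\alpha_k$, $0\leq\alpha_k\leq r-1$ for $k\leq n-1$ and $\alpha_n$ unrestricted. $\mathrm{Ap}(\Gamma,a)=\{s\in\Gamma\mid s-a\notin\Gamma\}$. *)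

(* Defs.v *)
From mathcomp Require Import all_boot.
Set Implicit Arguments. Unset Strict Implicit. Unset Printing Implicit Defensive.

Definition in_semigroup (m : nat) (g : nat -> nat) (s : nat) : Prop :=
  exists c : nat -> nat, s = \sum_(k < m) c k * g k.

Definition in_semigroup_excl (m : nat) (g : nat -> nat) (j : nat) (s : nat) : Prop :=
  exists c : nat -> nat, s = \sum_(k < m | val k != j) c k * g k.

Definition minimal_generators (m : nat) (g : nat -> nat) : Prop :=
  forall j, j < m -> ~ in_semigroup_excl m g j (g j).

(* Apery set Ap(S, a) = { s in S | s - a not in S } (integer subtraction). *)
Definition in_apery (m : nat) (g : nat -> nat) (a s : nat) : Prop :=
  in_semigroup m g s /\ ~ (a <= s /\ in_semigroup m g (s - a)).

Definition gens (a d r h : nat) (k : nat) : nat :=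
  if k == 0 then a else h * a + r ^ (k.-1) * d.

(* k-th digit of the r-adic representation of i up to order n:
   alpha_k = (i / r^k) mod r for k < n, alpha_n = i / r^n (unrestricted). *)
Definition radic_digit (r n i k : nat) : nat :=
  if k < n then (i %/ r ^ k) %% r else i %/ r ^ n.

Definition radic_len (r n i : nat) : nat :=
  \sum_(k < n.+1) radic_digit r n i k.

(* Main.v *)
Require Import Defs.
From mathcomp Require Import all_boot.
From mathcomp Require Import zify.

Lemma digit0 r n x : radic_digit r n.+1 x 0 = x %% r.
Proof. by rewrite /radic_digit /= expn0 divn1. Qed.

Lemma digitS r n x i : radic_digit r n.+1 x i.+1 = radic_digit r n (x %/ r) i.
Proof. by rewrite /radic_digit ltnS !expnS !divnMA. Qed.

Lemma radic_len0 r x : radic_len r 0 x = x.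
Proof. by rewrite /radic_len big_ord_recl big_ord0 /radic_digit /= expn0 divn1 addn0. Qed.

Lemma radic_lenS r n x : radic_len r n.+1 x = x %% r + radic_len r n (x %/ r).
Proof.
rewrite /radic_len big_ord_recl digit0; congr (_ + _).
by apply: eq_bigr => i _; rewrite lift0 digitS.
Qed.

Lemma radic_len_zero r n : radic_len r n 0 = 0.
Proof.
elim: n => [|n IH]; first by rewrite radic_len0.
by rewrite radic_lenS mod0n div0n IH.
Qed.

Lemma L_succ r n x : 0 < r -> radic_len r n x.+1 <= (radic_len r n x).+1.
Proof.
move=> r0; elim: n x => [|n IH] x; first by rewrite !radic_len0.
rewrite !radic_lenS.
have hx := divn_eq x r; have hm := ltn_pmod x r0.
case: (ltngtP (x %% r).+1 r) => hr.
- have e : x.+1 = x %/ r * r + (x %% r).+1 by lia.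
  have -> : x.+1 %% r = (x %% r).+1 by rewrite e modnMDl (modn_small hr).
  have -> : x.+1 %/ r = x %/ r by rewrite e divnMDl // (divn_small hr) addn0.
  by rewrite addSn.
- lia.
- have e : x.+1 = (x %/ r).+1 * r by rewrite mulSn; lia.
  have -> : x.+1 %% r = 0 by rewrite e modnMl.
  have -> : x.+1 %/ r = (x %/ r).+1 by rewrite e mulnK.
  rewrite add0n.
  apply: leq_trans (IH _) _; lia.
Qed.

Lemma L_add r n x q : 0 < r -> radic_len r n (x + q) <= radic_len r n x + q.
Proof.
move=> r0; elim: q => [|q IH]; first by rewrite !addn0.
rewrite !addnS; apply: leq_trans (L_succ _ _ _ r0) _; by rewrite ltnS.
Qed.

Lemma L_sum r n (c : nat -> nat) : 0 < r ->
  radic_len r n (\sum_(k < n.+1) c k * r ^ k) <= \sum_(k < n.+1) c k.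
Proof.
move=> r0; elim: n c => [|n IH] c.
  by rewrite !big_ord_recl !big_ord0 radic_len0 expn0 muln1.
rewrite big_ord_recl [X in _ <= X]big_ord_recl expn0 muln1.
have E : \sum_(i < n.+1) c (lift ord0 i) * r ^ (lift ord0 i)
        = (\sum_(i < n.+1) c i.+1 * r ^ i) * r.
  rewrite big_distrl; apply: eq_bigr => i _.
  by rewrite lift0 expnS [r * _]mulnC mulnA.
have E2 : \sum_(i < n.+1) c (lift ord0 i) = \sum_(i < n.+1) c i.+1.
  by apply: eq_bigr => i _; rewrite lift0.
rewrite E E2 radic_lenS.
set Y := \sum_(i < n.+1) c i.+1 * r ^ i.
have h1 : (c 0 + Y * r) %% r = c 0 %% r by rewrite addnC modnMDl.
have h2 : (c 0 + Y * r) %/ r = Y + c 0 %/ r by rewrite addnC divnMDl.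
rewrite h1 h2.
have h3 := @L_add r n Y (c 0 %/ r) r0.
have h4 := IH (fun i => c i.+1).
have h5 := divn_eq (c 0) r.
have h6 : c 0 %/ r <= c 0 %/ r * r by rewrite leq_pmulr.
rewrite -/Y in h4. have h7 : c ord0 = c 0 by []. rewrite h7. move: h3 h4 h5 h6. generalize (c 0 %/ r) (c 0 %% r) (c 0 %/ r * r) (radic_len r n Y) (radic_len r n (Y + c 0 %/ r)). move=> *. lia.
Qed.

Lemma L_rec r n x : \sum_(k < n.+1) radic_digit r n x k * r ^ k = x.
Proof.
elim: n x => [|n IH] x.
  by rewrite big_ord_recl big_ord0 /radic_digit /= expn0 divn1 muln1 addn0.
rewrite big_ord_recl digit0 expn0 muln1.
have E : \sum_(i < n.+1) radic_digit r n.+1 x (lift ord0 i) * r ^ (lift ord0 i)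
        = (\sum_(i < n.+1) radic_digit r n (x %/ r) i * r ^ i) * r.
  rewrite big_distrl; apply: eq_bigr => i _.
  by rewrite lift0 digitS expnS [r * _]mulnC mulnA.
by rewrite E IH addnC -divn_eq.
Qed.

Lemma L_le r n x y : 0 < r -> x <= y -> radic_len r n x <= radic_len r n y + n * (r - 1).
Proof.
move=> r0 xy.
have ex : forall z, radic_digit r n z n = z %/ r ^ n by move=> z; rewrite /radic_digit ltnn.
have Dx z : radic_len r n z = \sum_(i < n) radic_digit r n z i + z %/ r ^ n.
  by rewrite /radic_len big_ord_recr /= ex.
rewrite !Dx.
have hb : \sum_(i < n) radic_digit r n x i <= n * (r - 1).
  apply: leq_trans (_ : \sum_(i < n) (r - 1) <= _).
    apply: leq_sum => i _; rewrite /radic_digit /= ltn_ord.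
    have := ltn_pmod (x %/ r ^ i) r0; lia.
  by rewrite sum_nat_const card_ord.
have := leq_div2r (r ^ n) xy. move: hb.
generalize (\sum_(i < n) radic_digit r n x i) (\sum_(i < n) radic_digit r n y i) (x %/ r ^ n) (y %/ r ^ n) (n * (r - 1)).
move=> *; lia.
Qed.

Lemma sum_gens a d r h n (c : nat -> nat) :
  \sum_(k < n.+2) c k * gens a d r h k =
  c 0 * a + (\sum_(k < n.+1) c k.+1) * h * a + (\sum_(k < n.+1) c k.+1 * r ^ k) * d.
Proof.
rewrite big_ord_recl /gens /= !big_distrl /= -addnA -big_split /=; congr (_ + _).
apply: eq_bigr => i _ /=. have -> : bump 0 i = i.+1 by rewrite /bump leq0n. by rewrite add0n mulnDr !mulnA.
Qed.

Lemma in_S a d r h n X i :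
  in_semigroup n.+2 (gens a d r h) (a * X + radic_len r n i * h * a + i * d).
Proof.
pose c := fun k => if k is k'.+1 then radic_digit r n i k' else X.
exists c; rewrite sum_gens /c /= L_rec -/(radic_len r n i).
by rewrite mulnC.
Qed.

Lemma S_repr a d r h n s : 0 < a -> 0 < r -> h * n * (r - 1) < d ->
  in_semigroup n.+2 (gens a d r h) s ->
  exists X i, i < a /\ s = a * X + radic_len r n i * h * a + i * d.
Proof.
move=> a0 r0 hd [c ->]; rewrite sum_gens.
set C := \sum_(k < n.+1) c k.+1.
set J := \sum_(k < n.+1) c k.+1 * r ^ k.
have hC : radic_len r n J <= C by apply: (@L_sum r n (fun k => c k.+1) r0).
set i := J %% a; set t := J %/ a.
have hJ : J = t * a + i by apply: divn_eq.
have hi : i < a by apply: ltn_pmod.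
have hl : radic_len r n i * h <= c 0 + C * h + t * d.
  case: t hJ => [|t] hJ.
    rewrite mul0n add0n in hJ; rewrite -hJ.
    have := leq_mul2r h (radic_len r n J) C; rewrite hC orbT => ?; lia.
  have hiJ : i <= J by rewrite hJ leq_addl.
  have hle := @L_le r n _ _ r0 hiJ.
  have h1 := leq_mul2r h (radic_len r n i) (radic_len r n J + n * (r - 1)).
  rewrite hle orbT in h1.
  have h2 := leq_mul2r h (radic_len r n J) C; rewrite hC orbT in h2.
  have h3 : d <= t.+1 * d by rewrite mulSn leq_addr.
  move: h1 h2 h3 hd. rewrite mulnDl.
  have -> : n * (r - 1) * h = h * n * (r - 1) by rewrite mulnC mulnA.
  generalize (radic_len r n i * h) (radic_len r n J * h) (C * h) (h * n * (r - 1)) (t.+1 * d).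
  move=> *; lia.
exists (c 0 + C * h + t * d - radic_len r n i * h), i; split => //.
have HX := subnK hl.
move: (c 0 + C * h + t * d - radic_len r n i * h) HX => X HX.
rewrite hJ.
have HXa : (X + radic_len r n i * h) * a = (c 0 + C * h + t * d) * a by rewrite HX.
move: HXa; rewrite !mulnDl.
rewrite [a * X]mulnC [t * a * d]mulnAC.
generalize (X * a) (radic_len r n i * h * a) (c 0 * a) (C * h * a) (t * d * a) (i * d).
move=> *; lia.
Qed.

Lemma cop_eq a d i j : coprime a d -> i < a -> j < a -> i * d = j * d %[mod a] -> i = j.
Proof.
move=> cad ia ja.
wlog ij : i j ia ja / i <= j.
  move=> H E; case: (leqP i j) => hij; first exact: H.
  symmetry; apply: (H j i) => //; first exact: ltnW.
move=> /eqP; rewrite eq_sym eqn_mod_dvd ?leq_mul2r ?ij ?orbT // -mulnBl Gauss_dvdl //.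
case: (posnP (j - i)) => h0; first lia.
rewrite gtnNdvd //; lia.
Qed.

Theorem theorem7p3 (a d r h n : nat) :
  0 < a -> 0 < d -> 2 <= r -> 0 < h -> 0 < n ->
  coprime a d -> coprime a r ->
  h * n * (r - 1) < d ->
  minimal_generators n.+2 (gens a d r h) ->
  forall s : nat,
    in_apery n.+2 (gens a d r h) a s <->
    (s = 0 \/ exists i, 1 <= i <= a - 1 /\ s = radic_len r n i * h * a + i * d).
Proof.
move=> a0 d0 r2 h0 n0 cad car hd _ s.
have r0 : 0 < r by lia.
split.
- case=> Hs Hna.
  have [X [i [ia Es]]] := @S_repr a d r h n _ a0 r0 hd Hs.
  rewrite Es in Hna *; clear Es Hs.
  move: Hna; case: X => [|X].
    move=> _; rewrite muln0 add0n; case: i ia => [|i] ia.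
      by left; rewrite radic_len_zero.
    by right; exists i.+1; split => //; apply/andP; split; lia.
  move=> Hna; exfalso; apply: Hna; split.
    rewrite mulnS -!addnA; exact: leq_addr.
  rewrite mulnS -!addnA addKn !addnA; exact: in_S.
- case => [-> | [i [hi ->]]].
    split; first by exists (fun _ => 0); rewrite big1.
    by case; rewrite leqNgt a0.
  split.
    by have := in_S a d r h n 0 i; rewrite muln0 add0n.
  case=> Ha Hin.
  have [X [j [ja Hj]]] := @S_repr a d r h n _ a0 r0 hd Hin.
  have ia : i < a by lia.
  have E : radic_len r n i * h * a + i * d = (X.+1 + radic_len r n j * h) * a + j * d.
    move: Ha Hj. rewrite mulnDl mulSn [a * X]mulnC.
    generalize (radic_len r n i * h * a) (radic_len r n j * h * a) (i * d) (j * d) (X * a).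
    move=> *; lia.
  have M : i * d = j * d %[mod a].
    have M1 := modnMDl (radic_len r n i * h) (i * d) a.
    have M2 := modnMDl (X.+1 + radic_len r n j * h) (j * d) a.
    by rewrite -M1 -M2 E.
  have ij := @cop_eq a d i j cad ia ja M; subst j.
  move: E; rewrite mulnDl mulSn.
  generalize (radic_len r n i * h * a) (i * d) (X * a); move=> *; lia.
Qed.
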